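(* Let $m,n,u,v\in\mathbb{R}$ with $m+v\neq0$ and $mu-nv=0$, and let $(G_6,g,J)$ be the three-dimensional Lorentzian Lie group described in the context. Write $\mathbb{V}_{RC}$ for the real vector space of left-invariant Ricci collineations $\xi=\lambda_1\overline{e}_1+\lambda_2\overline{e}_2+\lambda_3\overline{e}_3$ ($\lambda_i\in\mathbb{R}$ constants) associated to the Yano connection. Then: (1) if $m=0$ (so $v\neq0$), every left-invariant vector field is a left-invariant Ricci collineation, i.e. $\mathbb{V}_{RC}=\langle\overline{e}_1,\overline{e}_2,\overline{e}_3\rangle$; (2) if $m\neq0$, then $\xi$ is a left-invariant Ricci collineation iff $\lambda_1=0$ and $m\lambda_2+u\lambda_3=0$, so $\mathbb{V}_{RC}=\langle -\frac{u}{m}\overline{e}_2+\overline{e}_3\rangle$.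
   Context: $G_6$ is a connected three-dimensional Lie group whose Lie algebra has a basis $\{\overline{e}_1,\overline{e}_2,\overline{e}_3\}$ (left-invariant vector fields) with $[\overline{e}_1,\overline{e}_2]=m\overline{e}_2+n\overline{e}_3$, $[\overline{e}_1,\overline{e}_3]=u\overline{e}_2+v\overline{e}_3$, $[\overline{e}_2,\overline{e}_3]=0$, where $m+v\neq0$ and $mu-nv=0$. The metric $g$ is the left-invariant Lorentzian metric with $g(\overline{e}_1,\overline{e}_1)=g(\overline{e}_2,\overline{e}_2)=1$, $g(\overline{e}_3,\overline{e}_3)=-1$, $g(\overline{e}_i,\overline{e}_j)=0$ for $i\neq j$. $J$ is the left-invariant product structure with $J\overline{e}_1=\overline{e}_1$, $J\overline{e}_2=\overline{e}_2$, $J\overline{e}_3=-\overline{e}_3$. With $\nabla^{LC}$ the Levi-Civita connection of $g$, the Yano connection is $\nabla^{*}_XY=\nabla^{LC}_XY-\frac12(\nabla^{LC}_YJ)JX-\frac14[(\nabla^{LC}_XJ)JY-(\nabla^{LC}_{JX}J)Y]$; its curvature is $R^{*}(X,Y)Z=\nabla^{*}_X\nabla^{*}_YZ-\nabla^{*}_Y\nabla^{*}_XZ-\nabla^{*}_{[X,Y]}Z$; its Ricci tensor is $\mathrm{Ric}^{*}(X,Y)=-g(R^{*}(X,\overline{e}_1)Y,\overline{e}_1)-g(R^{*}(X,\overline{e}_2)Y,\overline{e}_2)+g(R^{*}(X,\overline{e}_3)Y,\overline{e}_3)$; and $\overline{\mathrm{Ric}^{*}}(X,Y)=\frac12(\mathrm{Ric}^{*}(X,Y)+\mathrm{Ric}^{*}(Y,X))$.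 For a left-invariant vector field $\xi$, $(\mathrm{L}_{\xi}\overline{\mathrm{Ric}^{*}})(X,Y)=\xi(\overline{\mathrm{Ric}^{*}}(X,Y))-\overline{\mathrm{Ric}^{*}}([\xi,X],Y)-\overline{\mathrm{Ric}^{*}}(X,[\xi,Y])$; $\xi$ is a left-invariant Ricci collineation if $\mathrm{L}_{\xi}\overline{\mathrm{Ric}^{*}}=0$. *)

(* Defs.v *)
(* Left-invariant objects on the Lie group G_6 are modelled on
   its Lie algebra: a left-invariant vector field is its coordinate row vector
   X = X_1 e1 + X_2 e2 + X_3 e3 (entries X 0 0, X 0 1, X 0 2 : R). *)
From mathcomp Require Import all_boot all_order all_algebra.
Set Implicit Arguments. Unset Strict Implicit. Unset Printing Implicit Defensive.
Import Order.TTheory GRing.Theory Num.Theory.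
Local Open Scope ring_scope.

Section G6.
Variable R : realFieldType.
Variables m n u v : R.

Definition vec := 'rV[R]_3.
Definition i1 : 'I_3 := @Ordinal 3 0 isT.
Definition i2 : 'I_3 := @Ordinal 3 1 isT.
Definition i3 : 'I_3 := @Ordinal 3 2 isT.
Definition e1 : vec := delta_mx 0 i1.
Definition e2 : vec := delta_mx 0 i2.
Definition e3 : vec := delta_mx 0 i3.
Definition c1 (X : vec) := X 0 i1.
Definition c2 (X : vec) := X 0 i2.
Definition c3 (X : vec) := X 0 i3.

(* Lie bracket: bilinear, antisymmetric extension of
   [e1,e2] = m e2 + n e3, [e1,e3] = u e2 + v e3, [e2,e3] = 0 *)
Definition br (X Y : vec) : vec :=
  (c1 X * c2 Y - c2 X * c1 Y) *: (m *: e2 + n *: e3)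
  + (c1 X * c3 Y - c3 X * c1 Y) *: (u *: e2 + v *: e3).

Definition g (X Y : vec) : R := c1 X * c1 Y + c2 X * c2 Y - c3 X * c3 Y.

Definition J (X : vec) : vec := c1 X *: e1 + c2 X *: e2 - c3 X *: e3.

(* Levi-Civita connection on left-invariant fields, by the Koszul formula
   2 g(LC_X Y, Z) = g([X,Y],Z) - g([Y,Z],X) + g([Z,X],Y),
   solved in the orthonormal frame (g(e_k,e_k) = 1, 1, -1). *)
Definition koszul (X Y Z : vec) : R :=
  (g (br X Y) Z - g (br Y Z) X + g (br Z X) Y) / 2.
Definition LC (X Y : vec) : vec :=
  koszul X Y e1 *: e1 + koszul X Y e2 *: e2 - koszul X Y e3 *: e3.

Definition DJ (X Y : vec) : vec := LC X (J Y) - J (LC X Y).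

Definition Yano (X Y : vec) : vec :=
  LC X Y - (1/2) *: DJ Y (J X)
  - (1/4) *: (DJ X (J Y) - DJ (J X) Y).

Definition Rstar (X Y Z : vec) : vec :=
  Yano X (Yano Y Z) - Yano Y (Yano X Z) - Yano (br X Y) Z.

Definition Ricstar (X Y : vec) : R :=
  - g (Rstar X e1 Y) e1 - g (Rstar X e2 Y) e2 + g (Rstar X e3 Y) e3.

Definition Ricsym (X Y : vec) : R := (Ricstar X Y + Ricstar Y X) / 2.

(* Lie derivative along a left-invariant xi, evaluated on left-invariant X, Y.
   The term xi(Ricsym(X,Y)) vanishes since Ricsym(X,Y) is a constant function
   on the group for left-invariant X, Y. *)
Definition LieRic (xi X Y : vec) : R :=
  0 - Ricsym (br xi X) Y - Ricsym X (br xi Y).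

Definition ricci_collineation (xi : vec) : Prop :=
  forall X Y : vec, LieRic xi X Y = 0.

End G6.

(* Main.v *)
Require Import Defs.
From mathcomp Require Import all_boot all_order all_algebra.
From mathcomp Require Import ring.
Import Order.TTheory GRing.Theory Num.Theory.
Local Open Scope ring_scope.

Section S.
Variable R : realFieldType.
Variables m n u v : R.

Definition mk (a b c : R) : vec R := \row_(j < 3) [:: a; b; c]`_j.

Lemma c1_mk a b c : c1 (mk a b c) = a. Proof. by rewrite /c1 mxE. Qed.
Lemma c2_mk a b c : c2 (mk a b c) = b. Proof. by rewrite /c2 mxE. Qed.
Lemma c3_mk a b c : c3 (mk a b c) = c. Proof. by rewrite /c3 mxE. Qed.

Lemma mk_eq a b c a' b' c' : a = a' -> b = b' -> c = c' -> mk a b c = mk a' b' c'.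
Proof. by move=> -> -> ->. Qed.

Lemma vecE (X : vec R) : X = mk (c1 X) (c2 X) (c3 X).
Proof.
apply/rowP => j; rewrite mxE /c1 /c2 /c3.
by case: j => [[|[|[|j]]] Hj] //=; congr (X _ _); apply: val_inj.
Qed.

Lemma add_mk a b c a' b' c' : mk a b c + mk a' b' c' = mk (a+a') (b+b') (c+c').
Proof. by apply/rowP => j; rewrite !mxE; case: j => [[|[|[|j]]] Hj]. Qed.
Lemma opp_mk a b c : - mk a b c = mk (-a) (-b) (-c).
Proof. by apply/rowP => j; rewrite !mxE; case: j => [[|[|[|j]]] Hj]. Qed.
Lemma scale_mk k a b c : k *: mk a b c = mk (k*a) (k*b) (k*c).
Proof. by apply/rowP => j; rewrite !mxE; case: j => [[|[|[|j]]] Hj]. Qed.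
Lemma e1_mk : e1 R = mk 1 0 0.
Proof. by apply/rowP => j; rewrite !mxE; case: j => [[|[|[|j]]] Hj]. Qed.
Lemma e2_mk : e2 R = mk 0 1 0.
Proof. by apply/rowP => j; rewrite !mxE; case: j => [[|[|[|j]]] Hj]. Qed.
Lemma e3_mk : e3 R = mk 0 0 1.
Proof. by apply/rowP => j; rewrite !mxE; case: j => [[|[|[|j]]] Hj]. Qed.

Ltac norm := rewrite ?e1_mk ?e2_mk ?e3_mk; rewrite ?(c1_mk, c2_mk, c3_mk, scale_mk, opp_mk, add_mk).

Lemma br_mk x1 x2 x3 y1 y2 y3 : br m n u v (mk x1 x2 x3) (mk y1 y2 y3) =
  mk 0 ((x1*y2 - x2*y1)* m + (x1*y3-x3*y1)* u) ((x1*y2 - x2*y1)* n + (x1*y3-x3*y1)* v).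
Proof. rewrite /br; norm; apply: mk_eq; ring. Qed.

Lemma g_mk x1 x2 x3 y1 y2 y3 : g (mk x1 x2 x3) (mk y1 y2 y3) = x1*y1 + x2*y2 - x3*y3.
Proof. by rewrite /g; norm. Qed.

Lemma J_mk x1 x2 x3 : J (mk x1 x2 x3) = mk x1 x2 (-x3).
Proof. rewrite /J; norm; apply: mk_eq; ring. Qed.

Lemma LC_mk x1 x2 x3 y1 y2 y3 : LC m n u v (mk x1 x2 x3) (mk y1 y2 y3) =
  mk (-(v*x3*y3) + (u*x3*y2)/2 + (u*x2*y3)/2 - (n*x3*y2)/2 - (n*x2*y3)/2 + m*x2*y2)
     (-(u*x3*y1)/2 + (u*x1*y3)/2 + (n*x3*y1)/2 + (n*x1*y3)/2 - m*x2*y1)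
     (-(v*x3*y1) + (u*x2*y1)/2 + (u*x1*y2)/2 - (n*x2*y1)/2 + (n*x1*y2)/2).
Proof.
rewrite /LC /koszul !e1_mk !e2_mk !e3_mk !br_mk !g_mk; norm.
apply: mk_eq; field; rewrite ?pnatr_eq0 //.
Qed.

Lemma DJ_mk x1 x2 x3 y1 y2 y3 : DJ m n u v (mk x1 x2 x3) (mk y1 y2 y3) =
  mk (2*v*x3*y3 - u*x2*y3 + n*x2*y3) (-(u*x1*y3) - n*x1*y3)
     (-2*v*x3*y1 + u*x2*y1 + u*x1*y2 - n*x2*y1 + n*x1*y2).
Proof.
rewrite /DJ !J_mk !LC_mk J_mk; norm.
apply: mk_eq; field; rewrite ?pnatr_eq0 //.
Qed.

Lemma Yano_mk x1 x2 x3 y1 y2 y3 : Yano m n u v (mk x1 x2 x3) (mk y1 y2 y3) =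
  mk (m*x2*y2) (-u*x3*y1 - m*x2*y1) (v*x1*y3 - n*x2*y1 + n*x1*y2).
Proof.
rewrite /Yano !J_mk !DJ_mk LC_mk; norm.
apply: mk_eq; field; rewrite ?pnatr_eq0 //.
Qed.

Lemma Ricstar_mk x1 x2 x3 y1 y2 y3 : Ricstar m n u v (mk x1 x2 x3) (mk y1 y2 y3) =
  -(m^+2 + n*u)*x1*y1 - m^+2*x2*y2.
Proof.
rewrite /Ricstar /Rstar !e1_mk !e2_mk !e3_mk !br_mk !Yano_mk; norm; rewrite !g_mk.
ring.
Qed.

Lemma LieRic_mk a b c x1 x2 x3 y1 y2 y3 :
  LieRic m n u v (mk a b c) (mk x1 x2 x3) (mk y1 y2 y3) =
  - (m^+2*(m*b+u*c)) * (x1*y2 + x2*y1) + 2 * m^+3*a*x2*y2 + m^+2*u*a*(x2*y3+x3*y2).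
Proof.
rewrite /LieRic /Ricsym !br_mk !Ricstar_mk.
field; rewrite ?pnatr_eq0 //.
Qed.
End S.
Arguments mk {R}.
Arguments vecE {R}.

Lemma xi_mk (R : realFieldType) (l1 l2 l3 : R) :
  l1 *: e1 R + l2 *: e2 R + l3 *: e3 R = mk l1 l2 l3.
Proof. rewrite e1_mk e2_mk e3_mk !scale_mk !add_mk; apply: mk_eq; ring. Qed.

Theorem theorem4p6 (R : realFieldType) (m n u v : R) :
  m + v != 0 -> m * u - n * v = 0 ->
  (m = 0 -> forall l1 l2 l3 : R,
     ricci_collineation m n u v (l1 *: e1 R + l2 *: e2 R + l3 *: e3 R)) /\
  (m != 0 -> forall l1 l2 l3 : R,
     ricci_collineation m n u v (l1 *: e1 R + l2 *: e2 R + l3 *: e3 R) <->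
     (l1 = 0 /\ m * l2 + u * l3 = 0)).
Proof.
move=> _ _; split.
  move=> -> l1 l2 l3 X Y; rewrite xi_mk (vecE X) (vecE Y) LieRic_mk; ring.
move=> m0 l1 l2 l3; rewrite xi_mk; split.
  move=> H.
  have H12 := H (mk 1 0 0) (mk 0 1 0); have H22 := H (mk 0 1 0) (mk 0 1 0).
  rewrite LieRic_mk in H12; rewrite LieRic_mk in H22.
  have m2 : m^+2 != 0 by rewrite expf_neq0.
  have m3 : 2 * m^+3 != 0 by rewrite mulf_neq0 ?expf_neq0 ?pnatr_eq0.
  have E1 : (2 * m^+3) * l1 = 0 by rewrite -H22; ring.
  have E2 : m^+2 * (m * l2 + u * l3) = 0 by rewrite -[RHS]oppr0 -H12; ring.
  move/eqP: E1; rewrite mulf_eq0 (negbTE m3) /= => /eqP E1.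
  move/eqP: E2; rewrite mulf_eq0 (negbTE m2) /= => /eqP E2.
  by [].
move=> [-> Hb] X Y; rewrite (vecE X) (vecE Y) LieRic_mk Hb; ring.
Qed.
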